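(* Let $\delta$ be an ordinal with $\mathrm{cf}(\omega^\delta)=\kappa\ge\omega$, and suppose $\omega^\delta=\sum_{\xi<\kappa}\omega^{\delta_\xi}$, where $\delta_\xi\le\delta_\zeta$ whenever $\xi<\zeta<\kappa$, and $\mathrm{cf}(\omega^{\delta_\xi})\ge\kappa$ for all $\xi<\kappa$. Then $\mathcal P_\kappa\hookrightarrow_c\mathrm{sq}\,\mathbb P(\omega^\delta)$.
   Context: $\mathbb P(\omega^\delta)$ is the poset of subsets of $\omega^\delta$ order-isomorphic to $\omega^\delta$, ordered by $\subset$; $\mathrm{sq}$ denotes separative quotient (antisymmetric quotient of the separative modification $p\le^*q\iff\forall r\le p\,\exists s\le r\, s\le q$). For a cardinal $\kappa$, $\mathcal P_\kappa=(P(\kappa)/[\kappa]^{<\kappa})^+$, the nonzero elements of the quotient of $P(\kappa)$ by the ideal of subsets of size $<\kappa$. A map $f:\mathbb P\to\mathbb Q$ between preorders is a complete embedding ($\hookrightarrow_c$) iff (1) $p_1\le p_2\Rightarrow f(p_1)\le f(p_2)$; (2) $p_1\perp p_2\iff f(p_1)\perp f(p_2)$; (3) for every $q\in\mathbb Q$ there is $p\in\mathbb P$ such that $f(p')$ is compatible with $q$ for all $p'\le p$. $\mathbb P\hookrightarrow_c\mathbb Q$ means such an $f$ exists. *)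

(* Defs.v *)
From Stdlib Require Import List.

(** Linear orders (carrier + strict order relation). An ordinal is represented
    by a type with a strict well-order (its order type). *)
Record LO := mkLO { car :> Type; lt : car -> car -> Prop }.
Arguments lt {_}.

Definition le {A : LO} (x y : A) := lt x y \/ x = y.

Definition is_wellorder (A : LO) : Prop :=
  (forall x : A, ~ lt x x) /\
  (forall x y z : A, lt x y -> lt y z -> lt x z) /\
  (forall x y : A, lt x y \/ x = y \/ lt y x) /\
  well_founded (@lt A).

Definition strict_mono {A B : LO} (f : A -> B) :=
  forall x y, lt x y -> lt (f x) (f y).

Definition order_iso {A B : LO} (f : A -> B) :=
  (exists g : B -> A, (forall x, g (f x) = x) /\ (forall y, f (g y) = y)) /\
  (forall x y, lt x y <-> lt (f x) (f y)).
Definition ord_iso (A B : LO) := exists f : A -> B, order_iso f.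

Definition ord_le (A B : LO) :=
  exists f : A -> B, strict_mono f /\
    (forall x y, lt y (f x) -> exists z, f z = y).

Definition natLO : LO := mkLO nat Peano.lt.

Definition cofinal_map {A B : LO} (f : A -> B) := forall b, exists a, le b (f a).
Definition cf_ge (A K : LO) : Prop :=
  forall B : LO, is_wellorder B -> forall g : B -> A,
    strict_mono g -> cofinal_map g -> ord_le K B.
Definition cf_eq (A K : LO) : Prop :=
  (exists f : K -> A, strict_mono f /\ cofinal_map f) /\ cf_ge A K.

(** omega^D : finitely supported functions D -> nat, compared at the
    largest index where they differ (Cantor normal form). *)
Definition fin_supp (D : LO) (f : D -> nat) :=
  exists l : list D, forall d, f d <> 0 -> In d l.
Definition omega_pow (D : LO) : LO :=
  mkLO {f : D -> nat | fin_supp D f}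
    (fun f g => exists d, proj1_sig f d < proj1_sig g d /\
       forall e, lt d e -> proj1_sig f e = proj1_sig g e).

Definition osum (K : LO) (A : K -> LO) : LO :=
  mkLO {x : K & A x}
    (fun a b => lt (projT1 a) (projT1 b) \/
       exists e : projT1 a = projT1 b,
         lt (eq_rect _ (fun x => car (A x)) (projT2 a) _ e) (projT2 b)).

Definition subLO (A : LO) (X : A -> Prop) : LO :=
  mkLO {x : A | X x} (fun x y => lt (proj1_sig x) (proj1_sig y)).

Record PO := mkPO { pcar :> Type; ple : pcar -> pcar -> Prop }.
Arguments ple {_}.

Definition compat {P : PO} (p q : P) := exists r, ple r p /\ ple r q.

Definition complete_emb {P Q : PO} (f : P -> Q) : Prop :=
  (forall p1 p2, ple p1 p2 -> ple (f p1) (f p2)) /\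
  (forall p1 p2, ~ compat p1 p2 <-> ~ compat (f p1) (f p2)) /\
  (forall q : Q, exists p : P, forall p', ple p' p -> compat (f p') q).

Definition Ppow (D : LO) : PO :=
  mkPO {X : omega_pow D -> Prop | ord_iso (subLO (omega_pow D) X) (omega_pow D)}
    (fun X Y => forall w, proj1_sig X w -> proj1_sig Y w).

Definition sep_le {P : PO} (p q : P) :=
  forall r, ple r p -> exists s, ple s r /\ ple s q.
Definition sep_equiv {P : PO} (p q : P) := sep_le p q /\ sep_le q p.
Definition sq (P : PO) : PO :=
  mkPO {C : P -> Prop | exists p, C = sep_equiv p}
    (fun C C' => exists p q, proj1_sig C p /\ proj1_sig C' q /\ sep_le p q).

(** P_kappa = (P(kappa)/[kappa]^{<kappa})^+ *)
Definition small (K : LO) (S : K -> Prop) :=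
  ~ exists f : K -> {x | S x}, forall a b, f a = f b -> a = b.
Definition symdiff (K : LO) (A B : K -> Prop) :=
  fun x => (A x /\ ~ B x) \/ (B x /\ ~ A x).
Definition Pkappa (K : LO) : PO :=
  mkPO {C : (K -> Prop) -> Prop |
          exists A, ~ small K A /\ C = (fun B => small K (symdiff K A B))}
    (fun C C' => exists A B, proj1_sig C A /\ proj1_sig C' B /\
        small K (fun x => A x /\ ~ B x)).

(* Main.v *)
Require Import Defs.
From Stdlib Require Import List Wellfounded Classical ClassicalEpsilon FunctionalExtensionality ProofIrrelevance PeanoNat Lia Wf_nat.

Section WO.
Variable X : LO.
Hypothesis HX : is_wellorder X.

Lemma wirr : forall x : X, ~ lt x x. Proof. apply HX. Qed.
Lemma wtrans : forall x y z : X, lt x y -> lt y z -> lt x z. Proof. apply HX. Qed.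
Lemma wtri : forall x y : X, lt x y \/ x = y \/ lt y x. Proof. apply HX. Qed.
Lemma wwf : well_founded (@lt X). Proof. apply HX. Qed.

Lemma wasym : forall x y : X, lt x y -> lt y x -> False.
Proof. intros x y H1 H2. exact (wirr x (wtrans _ _ _ H1 H2)). Qed.

Lemma wlt_le_trans : forall x y z : X, lt x y -> le y z -> lt x z.
Proof. intros x y z H [H'| <-]; [eapply wtrans; eauto| auto]. Qed.
Lemma wle_lt_trans : forall x y z : X, le x y -> lt y z -> lt x z.
Proof. intros x y z [H| ->] H'; [eapply wtrans; eauto| auto]. Qed.
Lemma wle_trans : forall x y z : X, le x y -> le y z -> le x z.
Proof. intros x y z [H| ->] H'; [left; eapply wlt_le_trans; eauto| auto]. Qed.
Lemma wle_refl : forall x : X, le x x. Proof. right; auto. Qed.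
Lemma wnot_lt : forall x y : X, ~ lt x y -> le y x.
Proof. intros x y H. destruct (wtri x y) as [?|[ -> |?]]; [tauto|right;auto|left;auto]. Qed.
Lemma wnot_le : forall x y : X, ~ le x y -> lt y x.
Proof. intros x y H. destruct (wtri x y) as [?|[ -> |?]]; auto; exfalso; apply H; [left|right]; auto. Qed.
Lemma wle_not_lt : forall x y : X, le x y -> ~ lt y x.
Proof. intros x y H H'. apply (wirr x). eapply wle_lt_trans; eauto. Qed.
Lemma wle_antisym : forall x y : X, le x y -> le y x -> x = y.
Proof. intros x y [H|H] H'; auto. exfalso; eapply wle_not_lt; eauto. Qed.

Lemma smono_ge (h : X -> X) : strict_mono h -> forall x, le x (h x).
Proof.
  intros Hh x. induction x as [x IH] using (well_founded_ind wwf).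
  destruct (wtri x (h x)) as [?|[?|Hl]]; [left;auto|right;auto|].
  exfalso. specialize (IH _ Hl). pose proof (Hh _ _ Hl).
  eapply wle_not_lt; eauto.
Qed.

Lemma wmin_ex (P : X -> Prop) : (exists x, P x) -> exists m, P m /\ forall y, P y -> le m y.
Proof.
  intros [x Hx]. revert Hx. induction x as [x IH] using (well_founded_ind wwf). intros Hx.
  destruct (classic (exists y, P y /\ lt y x)) as [[y [Hy Hyx]]|Hn].
  - apply (IH y Hyx Hy).
  - exists x. split; auto. intros y Hy. apply wnot_lt. intro. apply Hn; eauto.
Qed.

Definition wmin (P : X -> Prop) (d : X) : X :=
  match excluded_middle_informative (exists m, P m /\ forall y, P y -> le m y) with
  | left H => proj1_sig (constructive_indefinite_description _ H)
  | right _ => d end.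

Lemma wmin_spec P d : (exists x, P x) -> P (wmin P d) /\ forall y, P y -> le (wmin P d) y.
Proof.
  intros H. unfold wmin. destruct excluded_middle_informative as [H'|H'].
  - destruct constructive_indefinite_description; simpl; auto.
  - exfalso; apply H', wmin_ex, H.
Qed.
End WO.

Lemma smono_reflect {A B : LO} (f : A -> B) : is_wellorder A -> is_wellorder B ->
  strict_mono f -> forall x y, lt (f x) (f y) -> lt x y.
Proof.
  intros HA HB Hf x y H. destruct (wtri _ HA x y) as [?|[ -> |Hl]]; auto.
  - exfalso; eapply wirr; eauto.
  - exfalso; eapply wasym; eauto.
Qed.

Lemma smono_le {A B : LO} (f : A -> B) : strict_mono f -> forall x y, le x y -> le (f x) (f y).
Proof. intros Hf x y [H| ->]; [left; auto| right; auto]. Qed.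

Lemma smono_inj {A B : LO} (f : A -> B) : is_wellorder A -> is_wellorder B ->
  strict_mono f -> forall x y, f x = f y -> x = y.
Proof.
  intros HA HB Hf x y H. destruct (wtri _ HA x y) as [Hl|[ -> |Hl]]; auto; apply Hf in Hl;
  rewrite H in Hl; exfalso; eapply wirr; eauto.
Qed.

Lemma smono_comp {A B C : LO} (f : A -> B) (g : B -> C) : strict_mono f -> strict_mono g ->
  strict_mono (fun x => g (f x)).
Proof. intros Hf Hg x y H. auto. Qed.

Lemma sub_wo (X : LO) (Z : X -> Prop) : is_wellorder X -> is_wellorder (subLO X Z).
Proof.
  intros HX. split; [|split; [|split]].
  - intros [x ?]; simpl; apply wirr; auto.
  - intros [x1 ?] [y1 ?] [z1 ?]; simpl; apply wtrans; auto.
  - intros [x hx] [y hy]; simpl. destruct (wtri _ HX x y) as [?|[e|?]]; auto.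
    right; left. subst. f_equal. apply proof_irrelevance.
  - apply (wf_inverse_image _ _ (@lt X) (fun z : subLO X Z => proj1_sig z)). apply HX.
Qed.

Lemma sig_ext {A : Type} (P : A -> Prop) (x y : {a | P a}) : proj1_sig x = proj1_sig y -> x = y.
Proof. destruct x, y; simpl; intros ->; f_equal; apply proof_irrelevance. Qed.

Lemma list_max (X : LO) (HX : is_wellorder X) (L : list X) : forall (P : X -> Prop),
  (forall d, P d -> In d L) -> (exists d, P d) -> exists m, P m /\ forall d, P d -> le d m.
Proof.
  induction L as [|a L IH]; intros P HL Hex.
  - destruct Hex as [d Hd]. destruct (HL d Hd).
  - destruct (classic (exists d, P d /\ d <> a)) as [Hy|Hn].
    + destruct (IH (fun d => P d /\ d <> a)) as [m [[Hm1 Hm2] Hm3]].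
      * intros d [Hd1 Hd2]. destruct (HL d Hd1); auto. congruence.
      * auto.
      * destruct (classic (P a)) as [Pa|nPa].
        -- destruct (wtri _ HX a m) as [Hl|[He|Hl]].
           ++ exists m. split; auto. intros d Hd. destruct (classic (d = a)) as [->|]; [left; auto|auto].
           ++ congruence.
           ++ exists a. split; auto. intros d Hd. destruct (classic (d = a)) as [->|]; [right; auto|].
              left. eapply wle_lt_trans; eauto.
        -- exists m. split; auto. intros d Hd. apply Hm3. split; auto. congruence.
    + destruct Hex as [d Hd]. exists d. split; auto. intros d' Hd'.
      assert (d = a) by (apply NNPP; intro; apply Hn; eauto).
      assert (d' = a) by (apply NNPP; intro; apply Hn; eauto). subst. right; auto.
Qed.

Section OP.
Variable D : LO.
Hypothesis HD : is_wellorder D.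
Notation W := (omega_pow D).

Lemma op_ext (f g : W) : (forall d, proj1_sig f d = proj1_sig g d) -> f = g.
Proof. intros H. apply sig_ext. apply functional_extensionality. auto. Qed.

Lemma op_max (f : W) : (exists d, proj1_sig f d <> 0) ->
  exists m, proj1_sig f m <> 0 /\ forall d, proj1_sig f d <> 0 -> le d m.
Proof.
  destruct f as [f [l Hl]]; simpl. intros. apply (list_max _ HD l); auto.
Qed.

Lemma op_trans (f g h : W) : lt f g -> lt g h -> lt f h.
Proof.
  intros [d1 [H1 E1]] [d2 [H2 E2]].
  destruct (wtri _ HD d1 d2) as [Hl|[<-|Hl]].
  - exists d2. split. + rewrite E1; auto. + intros e He. rewrite E1, E2; auto. eapply wtrans; eauto.
  - exists d1. split. + lia. + intros e He. rewrite E1, E2; auto.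
  - exists d1. split. + rewrite <- E2; auto. + intros e He. rewrite E1, E2; auto. eapply wtrans; eauto.
Qed.

Lemma op_irr (f : W) : ~ lt f f.
Proof. intros [d [H _]]. lia. Qed.

Lemma op_tri (f g : W) : lt f g \/ f = g \/ lt g f.
Proof.
  destruct (classic (forall d, proj1_sig f d = proj1_sig g d)) as [He|Hn].
  - right; left. apply op_ext; auto.
  - destruct f as [f [lf Hf]], g as [g [lg Hg]]; simpl in *.
    destruct (list_max _ HD (lf ++ lg) (fun d => f d <> g d)) as [m [Hm1 Hm2]].
    + intros d Hd. apply in_or_app. destruct (Nat.eq_dec (f d) 0); [right; apply Hg; lia| left; apply Hf; auto].
    + apply not_all_ex_not in Hn. auto.
    + assert (Ha : forall e, lt m e -> f e = g e).
      { intros e He. apply NNPP. intro Hc. apply Hm2 in Hc. eapply wle_not_lt; eauto. }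
      assert (Ht : f m < g m \/ g m < f m) by lia. destruct Ht as [Hl|Hl].
      * left. exists m. simpl. split; auto.
      * right; right. exists m. simpl. split; auto. intros e He; symmetry; auto.
Qed.

Definition supp_le (f : W) d := forall e, proj1_sig f e <> 0 -> le e d.

Lemma acc_zero (f : W) : (forall e, proj1_sig f e = 0) -> Acc lt f.
Proof. intros H. constructor. intros g [d [Hd _]]. rewrite H in Hd. lia. Qed.

Definition lowf (d : D) (f : W) : D -> nat :=
  fun e => if excluded_middle_informative (lt e d) then proj1_sig f e else 0.
Lemma lowf_supp d f : fin_supp D (lowf d f).
Proof.
  destruct f as [f [l Hl]]. exists l. intros e. unfold lowf; simpl.
  destruct excluded_middle_informative; auto; lia.
Qed.
Definition low d f : W := exist _ (lowf d f) (lowf_supp d f).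

Lemma op_wf : well_founded (@lt W).
Proof.
  assert (Main : forall d (f : W), supp_le f d -> Acc lt f).
  { intros d. induction d as [d IHd] using (well_founded_ind (wwf _ HD)).
    assert (L1 : forall f : W, (forall e, proj1_sig f e <> 0 -> lt e d) -> Acc lt f).
    { intros f Hf. destruct (classic (exists e, proj1_sig f e <> 0)) as [Hx|Hx].
      - destruct (op_max f Hx) as [m [Hm1 Hm2]]. apply (IHd m); auto.
      - apply acc_zero. intros e. apply NNPP. intro; apply Hx; eauto. }
    intros f0 Hf0.
    assert (N : forall n (f : W), supp_le f d -> proj1_sig f d = n -> Acc lt f).
    { intros n. induction n as [n IHn] using (well_founded_ind lt_wf).
      assert (Hh : forall h : W, Acc lt h -> (forall e, ~ lt e d -> proj1_sig h e = 0) ->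
        forall f : W, supp_le f d -> proj1_sig f d = n ->
        (forall e, lt e d -> proj1_sig f e = proj1_sig h e) -> Acc lt f).
      { intros h Ah. induction Ah as [h _ IHh]. intros Hh0 f Hf Hfd Hfh.
        constructor. intros g [e0 [Hg1 Hg2]].
        assert (He0 : le e0 d) by (apply Hf; lia).
        assert (Hgs : supp_le g d).
        { intros e He. apply wnot_lt; auto. intro Hde. rewrite Hg2 in He.
          - apply Hf in He. eapply wle_not_lt; eauto.
          - eapply wle_lt_trans; eauto. }
        destruct He0 as [He0|<-].
        - apply (IHh (low d g)) with (f := g); auto.
          + exists e0. simpl. unfold lowf. split.
            * destruct excluded_middle_informative; [|tauto]. rewrite <- Hfh; auto.
            * intros e He. destruct excluded_middle_informative as [Hl|Hl].
              -- rewrite Hg2, Hfh; auto.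
              -- rewrite Hh0; auto.
          + intros e He; simpl; unfold lowf; destruct excluded_middle_informative; tauto.
          + rewrite Hg2; auto.
          + intros e He; simpl; unfold lowf; destruct excluded_middle_informative; tauto.
        - apply (IHn (proj1_sig g e0)); auto. lia. }
      intros f Hf Hfd. apply (Hh (low d f)); auto.
      - apply L1. intros e; simpl; unfold lowf; destruct excluded_middle_informative; tauto.
      - intros e He; simpl; unfold lowf; destruct excluded_middle_informative; tauto.
      - intros e He; simpl; unfold lowf; destruct excluded_middle_informative; tauto. }
    apply (N _ f0 Hf0 eq_refl). }
  intros f. destruct (classic (exists e, proj1_sig f e <> 0)) as [Hx|Hx].
  - destruct (op_max f Hx) as [m [Hm1 Hm2]]. apply (Main m); auto.
  - apply acc_zero. intros e. apply NNPP. intro; apply Hx; eauto.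
Qed.

Lemma op_wo : is_wellorder W.
Proof. split; [exact op_irr|split; [exact op_trans|split; [exact op_tri|exact op_wf]]]. Qed.

Definition opzero : W := exist _ (fun _ => 0) (ex_intro _ nil (fun d H => False_ind _ (H eq_refl))).

Lemma zero_le (v : W) : (forall e, proj1_sig v e = 0 -> False) \/ True -> le opzero v.
Proof.
  intros _. destruct (op_tri opzero v) as [?|[?|[d [Hd _]]]]; [left; auto|right; auto|].
  simpl in Hd. lia.
Qed.

Definition shiftf (m : D) (k : nat) (v : W) : D -> nat :=
  fun e => if excluded_middle_informative (e = m) then proj1_sig v e + k else proj1_sig v e.
Lemma shiftf_supp m k v : fin_supp D (shiftf m k v).
Proof.
  destruct v as [v [l Hl]]. exists (m :: l). intros e. unfold shiftf; simpl.
  destruct excluded_middle_informative; auto.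
Qed.
Definition shift m k v : W := exist _ (shiftf m k v) (shiftf_supp m k v).

Lemma shift_mono m k : strict_mono (shift m k).
Proof.
  intros v v' [d [H1 H2]]. exists d. simpl; unfold shiftf. split.
  - destruct excluded_middle_informative; lia.
  - intros e He. destruct excluded_middle_informative; rewrite H2; auto.
Qed.

Lemma op_shift (u0 : W) : exists s : W -> W, strict_mono s /\ forall v, le u0 (s v).
Proof.
  destruct (classic (exists e, proj1_sig u0 e <> 0)) as [Hx|Hx].
  - destruct (op_max u0 Hx) as [m [Hm1 Hm2]].
    exists (shift m (proj1_sig u0 m + 1)). split; [apply shift_mono|].
    intros v. destruct (op_tri u0 (shift m (proj1_sig u0 m + 1) v)) as [?|[?|[d [Hd1 Hd2]]]];
      [left; auto|right; auto|].
    exfalso. simpl in Hd1, Hd2. unfold shiftf in Hd1, Hd2.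
    assert (Hdm : le d m) by (apply Hm2; lia).
    destruct Hdm as [Hdm| ->].
    + specialize (Hd2 m Hdm). destruct (excluded_middle_informative (m = m)); [lia|congruence].
    + destruct (excluded_middle_informative (m = m)); [lia|congruence].
  - exists (fun v => v). split; [intros ? ? ?; auto|].
    intros v. replace u0 with opzero. + apply zero_le; auto.
    + apply op_ext. intros e; simpl. symmetry; apply NNPP; intro; apply Hx; eauto.
Qed.
End OP.

Section PUSH.
Variables A B : LO.
Hypothesis HA : is_wellorder A.
Hypothesis HB : is_wellorder B.
Variable m : A -> B.
Hypothesis Hm : strict_mono m.

Definition pushf (f : omega_pow A) (b : B) : nat :=
  match excluded_middle_informative (exists a, m a = b) with
  | left H => proj1_sig f (proj1_sig (constructive_indefinite_description _ H))
  | right _ => 0 end.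

Lemma pushf_at f a : pushf f (m a) = proj1_sig f a.
Proof.
  unfold pushf. destruct excluded_middle_informative as [H|H]; [|exfalso; eauto].
  destruct constructive_indefinite_description as [a' Ha']; simpl.
  apply (smono_inj m HA HB Hm) in Ha'. subst; auto.
Qed.
Lemma pushf_out f b : ~ (exists a, m a = b) -> pushf f b = 0.
Proof. intros H. unfold pushf. destruct excluded_middle_informative; tauto. Qed.

Lemma pushf_supp f : fin_supp B (pushf f).
Proof.
  destruct f as [f [l Hl]]. exists (map m l). intros b Hb.
  destruct (classic (exists a, m a = b)) as [[a <-]|H].
  - apply in_map. apply Hl. rewrite pushf_at in Hb. auto.
  - rewrite pushf_out in Hb; auto. lia.
Qed.
Definition push f : omega_pow B := exist _ (pushf f) (pushf_supp f).

Lemma push_mono : strict_mono push.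
Proof.
  intros f g [d [H1 H2]]. exists (m d). simpl. rewrite !pushf_at. split; auto.
  intros b Hb. destruct (classic (exists a, m a = b)) as [[a <-]|H].
  - rewrite !pushf_at. apply H2. apply (smono_reflect m HA HB Hm); auto.
  - rewrite !pushf_out; auto.
Qed.
End PUSH.

Lemma ord_le_op (A B : LO) : is_wellorder A -> is_wellorder B -> ord_le A B ->
  exists j : omega_pow A -> omega_pow B, strict_mono j.
Proof. intros HA HB [m [Hm _]]. exists (push A B HA HB m Hm). apply push_mono. Qed.

Section COLL.
Variable X : LO.
Hypothesis HX : is_wellorder X.
Variable Z : X -> Prop.
Let T := subLO X Z.
Let HT : is_wellorder T := sub_wo X Z HX.

Definition cstep (z : T) (rec : forall z', lt z' z -> X) : X :=
  wmin X (fun x => forall z' (H : lt z' z), lt (rec z' H) x) (proj1_sig z).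

Definition coll : T -> X := Fix (wwf _ HT) (fun _ => X) cstep.

Lemma coll_eq z : coll z = wmin X (fun x => forall z', lt z' z -> lt (coll z') x) (proj1_sig z).
Proof.
  unfold coll. rewrite Fix_eq.
  - unfold cstep. f_equal.
  - intros x f g Hfg. unfold cstep.
    replace g with f; auto. apply functional_extensionality_dep; intro y.
    apply functional_extensionality_dep; intro p. auto.
Qed.

Lemma coll_prop z : le (coll z) (proj1_sig z) /\ forall z', lt z' z -> lt (coll z') (coll z).
Proof.
  induction z as [z IH] using (well_founded_ind (wwf _ HT)).
  assert (Hp : forall z', lt z' z -> lt (coll z') (proj1_sig z)).
  { intros z' Hz'. apply (wle_lt_trans X HX _ (proj1_sig z')); [apply IH; auto| exact Hz']. }
  destruct (wmin_spec X HX (fun x => forall z', lt z' z -> lt (coll z') x) (proj1_sig z)) as [H1 H2].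
  - eauto.
  - rewrite coll_eq. split; auto.
Qed.

Lemma coll_mono : strict_mono coll.
Proof. intros x y H. apply (coll_prop y); auto. Qed.

Lemma coll_down z x : lt x (coll z) -> exists z', coll z' = x.
Proof.
  revert x. induction z as [z IH] using (well_founded_ind (wwf _ HT)). intros x Hx.
  destruct (classic (forall z', lt z' z -> lt (coll z') x)) as [Hall|Hn].
  - exfalso. rewrite coll_eq in Hx.
    destruct (wmin_spec X HX (fun x => forall z', lt z' z -> lt (coll z') x) (proj1_sig z)) as [H1 H2].
    + exists x; auto.
    + specialize (H2 x Hall). exact (wle_not_lt X HX _ _ H2 Hx).
  - apply not_all_ex_not in Hn. destruct Hn as [z' Hz']. apply imply_to_and in Hz'.
    destruct Hz' as [Hz1 Hz2]. apply (wnot_lt X HX) in Hz2. destruct Hz2 as [Hl|He]; [exact (IH z' Hz1 x Hl)| exists z'; auto].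
Qed.

Lemma coll_cases : (forall x, exists z, coll z = x) \/ exists g, forall z, lt (coll z) g.
Proof.
  destruct (classic (forall x, exists z, coll z = x)) as [H|H]; auto. right.
  apply not_all_ex_not in H. destruct H as [g Hg]. exists g. intros z.
  destruct (wtri _ HX (coll z) g) as [?|[He|Hl]]; auto; exfalso; apply Hg; eauto.
  apply (coll_down z g Hl).
Qed.

Lemma coll_iso : (forall x, exists z, coll z = x) -> ord_iso T X.
Proof.
  intros Hs. exists coll. split.
  - exists (fun x => proj1_sig (constructive_indefinite_description _ (Hs x))). split.
    + intros z. destruct constructive_indefinite_description as [z' Hz']; simpl.
      apply (smono_inj coll HT HX coll_mono); auto.
    + intros x. destruct constructive_indefinite_description as [z' Hz']; simpl; auto.
  - intros x y; split; [apply coll_mono|apply (smono_reflect coll HT HX coll_mono)].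
Qed.

Lemma copy_lemma (g : X -> X) : strict_mono g -> (forall x, Z (g x)) -> ord_iso T X.
Proof.
  intros Hg HZ. destruct coll_cases as [H|[gm Hgm]]; [apply coll_iso; auto|].
  exfalso. set (h := fun x => coll (exist Z (g x) (HZ x) : T)).
  assert (Hh : strict_mono h). { intros x y Hxy. unfold h. apply coll_mono. simpl. auto. }
  pose proof (smono_ge X HX h Hh gm) as Hge. specialize (Hgm (exist Z (g gm) (HZ gm))).
  exact (wle_not_lt X HX _ _ Hge Hgm).
Qed.
End COLL.

Lemma onto_enum (X : LO) (HX : is_wellorder X) (Z : X -> Prop) :
  (forall x, exists z, coll X HX Z z = x) ->
  exists b : X -> X, strict_mono b /\ forall x, Z (b x).
Proof.
  intros Hs. destruct (coll_iso X HX Z Hs) as [e [[gi [Hg1 Hg2]] Hiff]].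
  exists (fun x => proj1_sig (gi x)). split.
  - intros x y H. apply Hiff. simpl. rewrite !Hg2. auto.
  - intros x. exact (proj2_sig (gi x)).
Qed.

Section REG.
Variables K W : LO.
Hypothesis HK : is_wellorder K.
Hypothesis HW : is_wellorder W.
Variable c : K -> W.
Hypothesis Hc : strict_mono c.
Hypothesis Hcof : cofinal_map c.
Hypothesis Hcf : cf_ge W K.

Definition bounded (B : K -> Prop) := exists b, forall x, B x -> lt x b.
Definition unbnd (B : K -> Prop) := forall b, exists x, B x /\ le b x.

Lemma not_bounded_unbnd B : ~ bounded B -> unbnd B.
Proof.
  intros H b. apply NNPP. intros Hn. apply H. exists b. intros x Hx.
  apply (wnot_le K HK). intro. apply Hn. eauto.
Qed.

Lemma unbnd_not_bounded B : unbnd B -> ~ bounded B.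
Proof.
  intros H [b Hb]. destruct (H b) as [x [Hx Hl]]. apply (wle_not_lt K HK _ _ Hl), Hb, Hx.
Qed.

Lemma enum (H : K -> Prop) : unbnd H -> exists b : K -> K, strict_mono b /\ forall x, H (b x).
Proof.
  intros Hu. destruct (coll_cases K HK H) as [Hs|[g Hg]]; [apply (onto_enum K HK); auto|].
  exfalso.
  assert (Hord : ord_le K (subLO K H)).
  { apply (Hcf (subLO K H) (sub_wo K H HK) (fun z => c (proj1_sig z))).
    - intros x y Hxy. apply Hc. exact Hxy.
    - intros w. destruct (Hcof w) as [x Hx]. destruct (Hu x) as [x' [Hx' Hl]].
      exists (exist H x' Hx'). simpl. apply (wle_trans W HW _ (c x)); auto. apply smono_le; auto. }
  destruct Hord as [m [Hm _]].
  set (h := fun x => coll K HK H (m x)).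
  assert (Hh : strict_mono h) by (intros x y Hxy; apply coll_mono; auto).
  exact (wle_not_lt K HK _ _ (smono_ge K HK h Hh g) (Hg (m g))).
Qed.

Lemma unbnd_not_small H : unbnd H -> ~ small K H.
Proof.
  intros Hu Hs. destruct (enum H Hu) as [b [Hb HbH]]. apply Hs.
  exists (fun x => exist _ (b x) (HbH x)). intros x y Hxy.
  apply (smono_inj b HK HK Hb). apply (f_equal (@proj1_sig _ _)) in Hxy. exact Hxy.
Qed.

Lemma bounded_small B : bounded B -> small K B.
Proof.
  intros [bt Hbt] [f Hf].
  set (g := fun x => proj1_sig (f x)).
  assert (Hgi : forall x y, g x = g y -> x = y).
  { intros x y H. apply Hf. apply sig_ext. exact H. }
  set (rec := fun x => forall x', lt (g x') (g x) -> lt (c x') (c x)).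
  set (R := mkLO {x | rec x} (fun a b => lt (g (proj1_sig a)) (g (proj1_sig b)))).
  assert (HR : is_wellorder R).
  { split; [|split; [|split]].
    - intros a. apply (wirr K HK).
    - intros a b d. apply (wtrans K HK).
    - intros a b. destruct (wtri K HK (g (proj1_sig a)) (g (proj1_sig b))) as [?|[He|?]]; auto.
      right; left. apply sig_ext. apply Hgi; auto.
    - apply (wf_inverse_image _ _ (@lt K) (fun a : R => g (proj1_sig a))). apply (wwf K HK). }
  assert (Hord : ord_le K R).
  { apply (Hcf R HR (fun a => c (proj1_sig a))).
    - intros a b Hab. simpl in Hab. destruct b as [b Hb]. simpl. apply Hb. exact Hab.
    - intros w. destruct (Hcof w) as [x Hx].
      destruct (wmin_ex K HK (fun y => exists x', g x' = y /\ le (c x) (c x'))) as [ym [[xs [Hxs1 Hxs2]] Hmin]].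
      + exists (g x). exists x. split; auto. apply (wle_refl W).
      + assert (Hr : rec xs).
        { intros x'' Hx''. rewrite Hxs1 in Hx''.
          assert (Hn : ~ le (c x) (c x'')).
          { intros Hl. apply (wle_not_lt K HK _ _ (Hmin (g x'') (ex_intro _ x'' (conj eq_refl Hl))) Hx''). }
          apply (wnot_le W HW) in Hn. apply (wlt_le_trans W HW _ _ _ Hn Hxs2). }
        exists (exist _ xs Hr). simpl. apply (wle_trans W HW _ _ _ Hx Hxs2). }
  destruct Hord as [m [Hm _]].
  set (h := fun x => g (proj1_sig (m x))).
  assert (Hh : strict_mono h) by (intros x y Hxy; apply Hm; auto).
  exact (wle_not_lt K HK _ _ (smono_ge K HK h Hh bt) (Hbt _ (proj2_sig (f (proj1_sig (m bt)))))).
Qed.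

Lemma small_bounded B : small K B -> bounded B.
Proof.
  intros Hs. apply NNPP. intros Hb. apply (unbnd_not_small B); auto. apply not_bounded_unbnd; auto.
Qed.

Lemma small_iff B : small K B <-> bounded B.
Proof. split; [apply small_bounded|apply bounded_small]. Qed.

Lemma bounded_mono (A B : K -> Prop) : (forall x, A x -> B x) -> bounded B -> bounded A.
Proof. intros H [b Hb]; exists b; auto. Qed.

Lemma bounded_or (A B : K -> Prop) : bounded A -> bounded B -> bounded (fun x => A x \/ B x).
Proof.
  intros [a Ha] [b Hb]. destruct (wtri K HK a b) as [Hl|[<-|Hl]].
  - exists b. intros x [Hx|Hx]; auto. apply (wtrans K HK _ a); auto.
  - exists a. intros x [Hx|Hx]; auto.
  - exists a. intros x [Hx|Hx]; auto. apply (wtrans K HK _ b); auto.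
Qed.
End REG.

Section MAIN.
Variables (D K : LO) (Dx : K -> LO).
Hypothesis HD : is_wellorder D.
Hypothesis HK : is_wellorder K.
Hypothesis HDx : forall x, is_wellorder (Dx x).
Notation W := (omega_pow D).
Notation S := (osum K (fun x => omega_pow (Dx x))).
Let HW : is_wellorder W := op_wo D HD.
Variable c : K -> W.
Hypothesis Hc : strict_mono c.
Hypothesis Hcof : cofinal_map c.
Hypothesis HcfW : cf_ge W K.
Variable d0 : D.
Variable phi : W -> S.
Variable phiinv : S -> W.
Hypothesis Hphi1 : forall w, phiinv (phi w) = w.
Hypothesis Hphi2 : forall s, phi (phiinv s) = s.
Hypothesis Hphilt : forall x y, lt x y <-> lt (phi x) (phi y).
Hypothesis Hmono : forall x z : K, lt x z -> ord_le (Dx x) (Dx z).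
Hypothesis HcfX : forall x : K, cf_ge (omega_pow (Dx x)) K.

Lemma W_nomax (v : W) : lt v (shift D d0 1 v).
Proof.
  exists d0. simpl. unfold shiftf. split.
  - destruct excluded_middle_informative; [lia|congruence].
  - intros e He. destruct excluded_middle_informative; auto. subst. exfalso; apply (wirr D HD d0 He).
Qed.

Lemma K_nomax (x : K) : exists y, lt x y.
Proof.
  destruct (Hcof (shift D d0 1 (c x))) as [y Hy]. exists y.
  apply (smono_reflect c HK HW Hc). apply (wlt_le_trans W HW _ _ _ (W_nomax _) Hy).
Qed.

Definition idx (w : W) : K := projT1 (phi w).
Definition inj (e : K) (v : omega_pow (Dx e)) : W := phiinv (existT _ e v).

Lemma idx_mono x y : lt x y -> le (idx x) (idx y).
Proof.
  intros H. apply Hphilt in H. unfold idx. destruct (phi x) as [a u], (phi y) as [b v].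
  simpl in *. destruct H as [H|[E _]]; [left; auto|right; auto].
Qed.
Lemma idx_le x y : le x y -> le (idx x) (idx y).
Proof. intros [H| ->]; [apply idx_mono; auto| apply (wle_refl K)]. Qed.
Lemma idx_reflect x y : lt (idx x) (idx y) -> lt x y.
Proof.
  intros H. destruct (wtri W HW x y) as [?|[->|Hl]]; auto; exfalso.
  - apply (wirr K HK _ H).
  - apply idx_mono in Hl. exact (wle_not_lt K HK _ _ Hl H).
Qed.
Lemma idx_inj e v : idx (inj e v) = e.
Proof. unfold idx, inj. rewrite Hphi2. reflexivity. Qed.
Lemma inj_mono e : strict_mono (inj e).
Proof.
  intros u v H. apply Hphilt. unfold inj. rewrite !Hphi2. simpl. right. exists eq_refl. simpl. exact H.
Qed.
Lemma inj_lt e e' u v : lt e e' -> lt (inj e u) (inj e' v).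
Proof. intros H. apply idx_reflect. rewrite !idx_inj. exact H. Qed.

Definition copy (Z : W -> Prop) := ord_iso (subLO W Z) W.

Lemma gen_embed (Z : W -> Prop) (H : K -> Prop) (t : K -> K) (e : forall x, omega_pow (Dx x) -> W) :
  unbnd K H -> (forall x, H x -> strict_mono (e x)) ->
  (forall x v, H x -> Z (e x v) /\ idx (e x v) = t x) ->
  (forall x y, H x -> H y -> lt x y -> lt (t x) (t y)) -> copy Z.
Proof.
  intros Hu HeM HeZ Ht.
  destruct (enum K W HK HW c Hc Hcof HcfW H Hu) as [b [Hb HbH]].
  assert (Hj : forall x, exists j : omega_pow (Dx x) -> omega_pow (Dx (b x)), strict_mono j).
  { intros x. destruct (smono_ge K HK b Hb x) as [Hl|E].
    - apply ord_le_op; auto.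
    - rewrite <- E. exists (fun v => v). intros ? ? ?; auto. }
  set (J := fun x => proj1_sig (constructive_indefinite_description _ (Hj x))).
  assert (HJ : forall x, strict_mono (J x)) by (intros x; exact (proj2_sig (constructive_indefinite_description _ (Hj x)))).
  set (g := fun w => match phi w with existT _ x v => e (b x) (J x v) end).
  apply (copy_lemma W HW Z g).
  - intros w w' Hww'. apply Hphilt in Hww'. unfold g.
    destruct (phi w) as [x v], (phi w') as [x' v']. simpl in Hww'.
    destruct Hww' as [Hl|[E Hl]].
    + apply idx_reflect. rewrite (proj2 (HeZ _ _ (HbH x))), (proj2 (HeZ _ _ (HbH x'))).
      apply Ht; auto.
    + simpl in E. subst x'. simpl in Hl. apply (HeM (b x) (HbH x)). apply (HJ x). exact Hl.
  - intros w. unfold g. destruct (phi w) as [x v]. apply HeZ; auto.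
Qed.

Lemma copy_map Z : copy Z -> exists P : W -> W, strict_mono P /\ forall w, Z (P w).
Proof.
  intros [f [[gi [H1 H2]] Hiff]]. exists (fun w => proj1_sig (gi w)). split.
  - intros x y H. change (lt (gi x) (gi y)). apply Hiff. rewrite !H2. auto.
  - intros w. exact (proj2_sig (gi w)).
Qed.

Lemma copy_bounded_contra Z b : copy Z -> (forall w, Z w -> lt (idx w) b) -> False.
Proof.
  intros Hc0 Hb. destruct (copy_map Z Hc0) as [P [HP HPZ]].
  set (w0 := inj b (opzero (Dx b))).
  pose proof (smono_ge W HW P HP w0) as H1. apply idx_le in H1.
  unfold w0 in H1. rewrite idx_inj in H1.
  exact (wle_not_lt K HK _ _ H1 (Hb _ (HPZ _))).
Qed.

Lemma copy_final Y w0 : copy Y -> copy (fun w => Y w /\ le w0 w).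
Proof.
  intros HY. destruct (copy_map Y HY) as [P [HP HPY]].
  destruct (op_shift D HD w0) as [s [Hs Hs0]].
  apply (copy_lemma W HW _ (fun v => P (s v))).
  - apply smono_comp; auto.
  - intros v. split; auto. apply (wle_trans W HW _ (P w0)).
    + apply smono_ge; auto.
    + apply smono_le; auto.
Qed.

Lemma copy_sub Y Z : copy Y -> (forall w, Y w -> Z w) -> copy Z.
Proof.
  intros HY HYZ. destruct (copy_map Y HY) as [P [HP HPY]].
  apply (copy_lemma W HW _ P); auto.
Qed.

Lemma copyX (A : K -> Prop) : unbnd K A -> copy (fun w => A (idx w)).
Proof.
  intros Hu. apply (gen_embed _ A (fun x => x) inj Hu).
  - intros; apply inj_mono.
  - intros x v Hx. rewrite idx_inj. auto.
  - auto.
Qed.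
Variable k0 : K.
Notation PP := (Ppow D).

Lemma sep_le_refl (p : PP) : sep_le p p.
Proof. intros r Hr. exists r. split; auto. intros w h; exact h. Qed.
Lemma sep_le_trans (p q r : PP) : sep_le p q -> sep_le q r -> sep_le p r.
Proof.
  intros H1 H2 t Ht. destruct (H1 t Ht) as [s [Hs1 Hs2]]. destruct (H2 s Hs2) as [s' [Hs'1 Hs'2]].
  exists s'. split; auto. intros w h. apply Hs1, Hs'1, h.
Qed.
Lemma ple_sep (p q : PP) : ple p q -> sep_le p q.
Proof. intros H r Hr. exists r. split. - intros w h; exact h. - intros w h. apply H, Hr, h. Qed.
Lemma sep_equiv_refl (p : PP) : sep_equiv p p.
Proof. split; apply sep_le_refl. Qed.

Definition prep (C : Pkappa K) : K -> Prop := proj1_sig (constructive_indefinite_description _ (proj2_sig C)).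
Lemma prep_spec C : ~ small K (prep C) /\ proj1_sig C = (fun B => small K (symdiff K (prep C) B)).
Proof. unfold prep. destruct constructive_indefinite_description as [A HA]. simpl. exact HA. Qed.

Let sm_b := small_bounded K W HK HW c Hc Hcof HcfW.
Let b_sm := bounded_small K W HK HW c Hcof HcfW.

Lemma not_unbnd_bounded B : ~ unbnd K B -> bounded K B.
Proof. intros H. apply NNPP. intro Hb. apply H. apply not_bounded_unbnd; auto. Qed.

Lemma prep_unb C : unbnd K (prep C).
Proof.
  apply not_bounded_unbnd; auto. intro Hb. apply (proj1 (prep_spec C)). apply b_sm; auto.
Qed.

Lemma pk_mem C B : proj1_sig C B -> bounded K (symdiff K (prep C) B).
Proof. intros H. rewrite (proj2 (prep_spec C)) in H. apply sm_b; auto. Qed.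

Definition fP (C : Pkappa K) : PP := exist _ (fun w => prep C (idx w)) (copyX _ (prep_unb C)).
Definition fmap (C : Pkappa K) : sq PP := exist _ (sep_equiv (fP C)) (ex_intro _ (fP C) eq_refl).

Lemma sep_X (A B : K -> Prop) hA hB : bounded K (fun x => A x /\ ~ B x) ->
  sep_le (exist _ (fun w => A (idx w)) hA : PP) (exist _ (fun w => B (idx w)) hB).
Proof.
  intros [b Hb] r Hr.
  set (w0 := inj b (opzero (Dx b))).
  exists (exist _ (fun w => proj1_sig r w /\ le w0 w) (copy_final _ w0 (proj2_sig r))).
  split.
  - intros w [h _]; exact h.
  - intros w [h1 h2]. simpl. apply NNPP. intro Hn.
    apply idx_le in h2. unfold w0 in h2. rewrite idx_inj in h2.
    apply (wle_not_lt K HK _ _ h2). apply Hb. split; auto. apply (Hr w h1).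
Qed.

Lemma sub_rel (C C' : Pkappa K) : ple C C' -> bounded K (fun x => prep C x /\ ~ prep C' x).
Proof.
  intros [A1 [B1 [HA1 [HB1 Hs]]]]. apply pk_mem in HA1. apply pk_mem in HB1. apply sm_b in Hs.
  eapply bounded_mono; [| apply (bounded_or K HK _ _ HA1 (bounded_or K HK _ _ Hs HB1))].
  intros x [H1 H2]. unfold symdiff.
  destruct (classic (A1 x)); [|left; left; auto].
  destruct (classic (B1 x)); [|right; left; auto].
  right; right. right. auto.
Qed.

Lemma fmap_mono C1 C2 : ple C1 C2 -> ple (fmap C1) (fmap C2).
Proof.
  intros H. exists (fP C1), (fP C2). split; [apply sep_equiv_refl|split; [apply sep_equiv_refl|]].
  apply sep_X. apply sub_rel; auto.
Qed.

Lemma empty_small (A B : K -> Prop) : (forall x, A x -> B x) -> (forall x, B x -> A x) -> small K (symdiff K A B).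
Proof. intros H1 H2. apply b_sm. exists k0. intros x [[? ?]|[? ?]]; exfalso; auto. Qed.

Lemma pk_compat C1 C2 : compat C1 C2 <-> unbnd K (fun x => prep C1 x /\ prep C2 x).
Proof.
  split.
  - intros [C3 [H31 H32]]. apply sub_rel in H31. apply sub_rel in H32.
    apply NNPP. intro Hn. apply not_unbnd_bounded in Hn.
    apply (unbnd_not_bounded K HK _ (prep_unb C3)).
    eapply bounded_mono; [| apply (bounded_or K HK _ _ Hn (bounded_or K HK _ _ H31 H32))].
    intros x Hx. destruct (classic (prep C1 x)); [|right; left; auto].
    destruct (classic (prep C2 x)); [|right; right; auto]. left; auto.
  - intros Hu. set (I := fun x => prep C1 x /\ prep C2 x).
    set (C3 := exist (fun C => exists A, ~ small K A /\ C = (fun B => small K (symdiff K A B)))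
                 (fun B => small K (symdiff K I B)) (ex_intro _ I (conj (unbnd_not_small K W HK HW c Hc Hcof HcfW I Hu) eq_refl)) : Pkappa K).
    exists C3. split.
    + exists I, (prep C1). split; [apply empty_small; auto|split].
      * rewrite (proj2 (prep_spec C1)). apply empty_small; auto.
      * apply b_sm. exists k0. intros x [[? ?] ?]; tauto.
    + exists I, (prep C2). split; [apply empty_small; auto|split].
      * rewrite (proj2 (prep_spec C2)). apply empty_small; auto.
      * apply b_sm. exists k0. intros x [[? ?] ?]; tauto.
Qed.

Lemma sq_compat C1 C2 : compat (fmap C1) (fmap C2) <-> unbnd K (fun x => prep C1 x /\ prep C2 x).
Proof.
  split.
  - intros [[R [p0 HR]] [[p [q [Hp [Hq Hpq]]]] [p' [q' [Hp' [Hq' Hpq']]]]]].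
    simpl in *. subst R.
    assert (L1 : @sep_le PP p (fP C1)) by (apply (sep_le_trans p q (fP C1)); [auto|apply Hq]).
    assert (L2 : @sep_le PP p (fP C2)).
    { apply (sep_le_trans p p0 (fP C2)); [apply Hp|]. apply (sep_le_trans p0 p' (fP C2)); [apply Hp'|].
      apply (sep_le_trans p' q' (fP C2)); [auto|apply Hq']. }
    destruct (L1 p (fun w h => h)) as [s [Hs1 Hs2]].
    destruct (L2 s Hs1) as [s' [Hs'1 Hs'2]].
    apply NNPP. intro Hn. apply not_unbnd_bounded in Hn. destruct Hn as [b Hb].
    apply (copy_bounded_contra (proj1_sig s') b (proj2_sig s')).
    intros w Hw. apply Hb. split; [apply (Hs2 w (Hs'1 w Hw))| apply (Hs'2 w Hw)].
  - intros Hu. set (zP := exist _ (fun w => prep C1 (idx w) /\ prep C2 (idx w))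
                         (copyX (fun x => prep C1 x /\ prep C2 x) Hu) : PP).
    exists (exist _ (sep_equiv zP) (ex_intro _ zP eq_refl)). split.
    + exists zP, (fP C1). split; [apply sep_equiv_refl|split; [apply sep_equiv_refl|]].
      apply ple_sep. intros w [h _]; exact h.
    + exists zP, (fP C2). split; [apply sep_equiv_refl|split; [apply sep_equiv_refl|]].
      apply ple_sep. intros w [_ h]; exact h.
Qed.

Lemma maxB (P : W -> W) (HP : strict_mono P) (x : K) :
  exists m, (exists u, idx (P (inj x u)) = m) /\ forall u, le (idx (P (inj x u))) m.
Proof.
  set (cx := fun u => P (inj x u)).
  assert (Hcx : strict_mono cx) by (intros a b H; apply HP, inj_mono, H).
  set (Wx := omega_pow (Dx x)). assert (HWx : is_wellorder Wx) by apply op_wo, HDx.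
  apply NNPP; intro Hn.
  assert (Hnx : forall u, exists u', lt (idx (cx u)) (idx (cx u'))).
  { intro u. apply NNPP; intro Hu. apply Hn. exists (idx (cx u)). split; [exists u; reflexivity|].
    intros u'. apply (wnot_lt K HK). intro; apply Hu; eauto. }
  set (Cp := fun u : Wx => forall u', idx (cx u') = idx (cx u) -> le u u').
  assert (Hord : ord_le K (subLO Wx Cp)).
  { apply (HcfX x (subLO Wx Cp) (sub_wo Wx Cp HWx) (fun z => proj1_sig z)).
    - intros a b H; exact H.
    - intros u. destruct (Hnx u) as [u' Hu'].
      destruct (wmin_ex Wx HWx (fun y => idx (cx y) = idx (cx u'))) as [u2 [Hu2 Hmin]]; eauto.
      assert (HC : Cp u2). { intros u3 Hu3. apply Hmin. congruence. }
      exists (exist _ u2 HC). simpl. left.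
      apply (smono_reflect cx HWx HW Hcx). apply idx_reflect. rewrite Hu2. exact Hu'. }
  destruct Hord as [m [Hm _]].
  set (h := fun y => idx (cx (proj1_sig (m y)))).
  assert (Hh : strict_mono h).
  { intros a b Hab. unfold h. pose proof (Hm a b Hab) as Hmab.
    destruct (idx_mono _ _ (Hcx _ _ Hmab)) as [Hl|He]; auto. exfalso.
    pose proof (proj2_sig (m b) (proj1_sig (m a)) He) as Hle.
    exact (wle_not_lt Wx HWx _ _ Hle Hmab). }
  destruct (K_nomax x) as [x' Hx'].
  set (z := idx (P (inj x' (opzero (Dx x'))))).
  destruct (K_nomax z) as [y Hy].
  pose proof (smono_ge K HK h Hh y) as Hge.
  assert (Hlt : lt z (h y)) by (apply (wlt_le_trans K HK _ _ _ Hy Hge)).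
  unfold h, z in Hlt. apply idx_reflect in Hlt.
  pose proof (HP _ _ (inj_lt x x' (proj1_sig (m y)) (opzero (Dx x')) Hx')) as H2.
  exact (wasym W HW _ _ Hlt H2).
Qed.

Lemma cond3 (q : sq PP) : exists p : Pkappa K, forall p', ple p' p -> compat (fmap p') q.
Proof.
  destruct q as [Q [Y0 HQ]].
  set (Y := proj1_sig Y0).
  destruct (copy_map Y (proj2_sig Y0)) as [P [HP HPY]].
  assert (Hspec : forall x, exists pr : {m : K & omega_pow (Dx x) -> W},
    (exists u, idx (P (inj x u)) = projT1 pr) /\ (forall u, le (idx (P (inj x u))) (projT1 pr)) /\
    strict_mono (projT2 pr) /\ forall v, Y (projT2 pr v) /\ idx (projT2 pr v) = projT1 pr).
  { intros x. destruct (maxB P HP x) as [m [[u0 Hu0] Hmax]].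
    destruct (op_shift (Dx x) (HDx x) u0) as [s [Hs Hs0]].
    exists (existT _ m (fun v => P (inj x (s v)))). simpl.
    split; [eauto|split; [auto|split]].
    - intros a b H. apply HP, inj_mono, Hs, H.
    - intros v. split; [apply HPY|].
      apply (wle_antisym K HK); [apply Hmax|]. rewrite <- Hu0.
      apply idx_le. apply smono_le; [apply HP|]. apply smono_le; [apply inj_mono|]. apply Hs0. }
  set (sel := fun x => proj1_sig (constructive_indefinite_description _ (Hspec x))).
  set (xf := fun x => projT1 (sel x)).
  set (ef := fun x => projT2 (sel x)).
  assert (Hsel : forall x, (exists u, idx (P (inj x u)) = xf x) /\ (forall u, le (idx (P (inj x u))) (xf x)) /\
    strict_mono (ef x) /\ forall v, Y (ef x v) /\ idx (ef x v) = xf x).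
  { intros x. exact (proj2_sig (constructive_indefinite_description _ (Hspec x))). }
  assert (Hxge : forall x, le x (xf x)).
  { intros x. destruct (Hsel x) as [[u Hu] _]. rewrite <- Hu.
    rewrite <- (idx_inj x u) at 1. apply idx_le. apply smono_ge; auto. }
  assert (Hxmono : forall x y, lt x y -> le (xf x) (xf y)).
  { intros x y Hxy. destruct (Hsel x) as [[u Hu] _]. rewrite <- Hu.
    apply (wle_trans K HK _ (idx (P (inj y (opzero (Dx y)))))).
    - apply idx_mono. apply HP. apply inj_lt; auto.
    - apply (Hsel y). }
  set (A := fun m => exists x, xf x = m).
  assert (HuA : unbnd K A).
  { intros b. exists (xf b). split; [exists b; auto|apply Hxge]. }
  exists (exist (fun C => exists A, ~ small K A /\ C = (fun B => small K (symdiff K A B)))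
           (fun B => small K (symdiff K A B))
           (ex_intro _ A (conj (unbnd_not_small K W HK HW c Hc Hcof HcfW A HuA) eq_refl))).
  intros p' Hp'.
  destruct Hp' as [A1 [B1 [HA1 [HB1 Hs]]]].
  apply pk_mem in HA1. simpl in HB1. apply sm_b in HB1. apply sm_b in Hs.
  set (R := prep p').
  assert (HRA : bounded K (fun x => R x /\ ~ A x)).
  { eapply bounded_mono; [| apply (bounded_or K HK _ _ HA1 (bounded_or K HK _ _ Hs HB1))].
    intros x [H1 H2]. unfold symdiff.
    destruct (classic (A1 x)); [|left; left; auto].
    destruct (classic (B1 x)); [|right; left; auto].
    right; right. right. auto. }
  assert (HuA' : unbnd K (fun x => R x /\ A x)).
  { apply NNPP. intro Hn. apply not_unbnd_bounded in Hn.
    apply (unbnd_not_bounded K HK _ (prep_unb p')).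
    eapply bounded_mono; [| apply (bounded_or K HK _ _ Hn HRA)].
    intros x Hx. destruct (classic (A x)); [left|right]; auto. }
  set (H := fun x => (R (xf x) /\ A (xf x)) /\ forall x', xf x' = xf x -> le x x').
  assert (HuH : unbnd K H).
  { intros b. destruct (K_nomax (xf b)) as [b' Hb'].
    destruct (HuA' b') as [m [[HRm [x1 Hx1]] Hm]].
    destruct (wmin_ex K HK (fun x => xf x = m)) as [xs [Hxs Hmin]]; [eauto|].
    exists xs. split.
    - split; [rewrite Hxs; split; auto; exists x1; auto|].
      intros x' Hx'. apply Hmin. congruence.
    - apply (wnot_lt K HK). intro Hl. apply Hxmono in Hl. rewrite Hxs in Hl.
      apply (wle_not_lt K HK _ _ Hl). apply (wlt_le_trans K HK _ _ _ Hb' Hm). }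
  set (Z := fun w => R (idx w) /\ Y w).
  assert (HZ : copy Z).
  { apply (gen_embed Z H xf ef HuH).
    - intros x _. apply Hsel.
    - intros x v [[HR _] _]. destruct (Hsel x) as [_ [_ [_ He]]]. destruct (He v) as [He1 He2].
      split; auto. split; auto. rewrite He2. auto.
    - intros x y [_ Hx] [_ Hy] Hxy. destruct (Hxmono x y Hxy) as [Hl|He]; auto.
      exfalso. apply (wle_not_lt K HK _ _ (Hy x He) Hxy). }
  set (zP := exist _ Z HZ : PP).
  exists (exist _ (sep_equiv zP) (ex_intro _ zP eq_refl)). split.
  - exists zP, (fP p'). split; [apply sep_equiv_refl|split; [apply sep_equiv_refl|]].
    apply ple_sep. intros w [h _]; exact h.
  - exists zP, Y0. split; [apply sep_equiv_refl|split].
    + simpl. rewrite HQ. apply sep_equiv_refl.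
    + apply ple_sep. intros w [_ h]; exact h.
Qed.

Lemma main_sec : exists f : Pkappa K -> sq PP, complete_emb f.
Proof.
  exists fmap. split; [|split].
  - apply fmap_mono.
  - intros p1 p2. rewrite pk_compat, sq_compat. tauto.
  - apply cond3.
Qed.
End MAIN.

Theorem mainTheorem8 (D K : LO) (Dx : K -> LO) :
  is_wellorder D ->
  is_wellorder K ->
  (forall x, is_wellorder (Dx x)) ->
  cf_eq (omega_pow D) K ->
  ord_le natLO K ->
  ord_iso (omega_pow D) (osum K (fun x => omega_pow (Dx x))) ->
  (forall x z : K, lt x z -> ord_le (Dx x) (Dx z)) ->
  (forall x : K, cf_ge (omega_pow (Dx x)) K) ->
  exists f : Pkappa K -> sq (Ppow D), complete_emb f.
Proof.
  intros HD HK HDx [[c [Hc Hcof]] HcfW] [m [Hm _]] [phi [[phiinv [H1 H2]] Hlt]] Hmono HcfX.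
  assert (H01 : @lt natLO 0 1) by (simpl; lia).
  destruct (Hc _ _ (Hm _ _ H01)) as [d0 _].
  exact (main_sec D K Dx HD HK HDx c Hc Hcof HcfW d0 phi phiinv H2 Hlt Hmono HcfX (m 0)).
Qed.
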